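(* In any execution of $\mathcal{U}$, let $Seq = (Seq_1,\dots,Seq_k)$ be the sequence, in time order, of all executions of line 12 that returned true up to and including some time $T$. Then for all $1 \le j < i \le k$, $Seq_j$ and $Seq_i$ are executions of line 12 for different operations.
   Context: Model: an asynchronous shared-memory system with possibly infinitely many processes, any of which may crash, communicating via atomic shared objects. A fetch-and-increment (F\&I) object stores an integer; F\&I$(C)$ atomically returns the current value and increments it. A generalized-compare-and-swap (GCAS) object $O$ stores a value and supports Read$(O)$ and GCAS$(c, O, v_1, v_2)$, which atomically does: if $c(\text{current value of } O, v_1)$ holds then set $O := v_2$ and return true, else return false. Tuples are compared componentwise for $=$; GCAS$(>, A, (t,-,-), v)$ succeeds iff the time field of $A$ is strictly greater than $t$. Implemented type $\mathcal{T} = (OP, RES, Q, \delta)$ with initial state $s_0$; a procedure $apply_{\mathcal{T}}(o,s)$ returns some $(s',r)$ with $(s,o,s',r)\in\delta$. $NULL$ is a value different from every response of $\mathcal{T}$, and $NOOP$ is a name different from every operation of $\mathcal{T}$. Algorithm $\mathcal{U}$: each process $p$ owns a GCAS object $H_p$ with fields $(time, response)$. Shared objects: F\&I object $C$, initially $1$; GCAS object $A$ with fields $(time, op, ptr)$, initially $(0, NOOP, h(NOOP))$, where $h(NOOP)$ is a pointer to an immutable location containing $(0,\perp)$; GCAS object $S$ with fields $(time, state, response, ptr)$, initially $(0, s_0, \perp, h(NOOP))$. Process $p$ performs operation $o$ by calling DoOp$(o)$: (1) DoOp$(o)$ invoked; (2) $t := $ F\&I$(C)$; (3) $H_p := (t,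 NULL)$; (4) while $H_p = (t, NULL)$ do: (5) $(t^*, s^*, r^*, roptr^* ) := S$; (6) GCAS$(=, *roptr^*, (t^*, NULL), (t^*, r^* ))$; (7) GCAS$(>, A, (t,-,-), (t, o, \&H_p))$; (8) $(t', o', roptr') := A$; (9) $(\hat t, \hat r) := *roptr'$; (10) if $(\hat t,\hat r) = (t', NULL)$ then (11) $(s', r') := apply_{\mathcal{T}}(o', s^* )$; (12) GCAS$(=, S, (t^*,s^*,r^*,roptr^* ), (t', s', r', roptr'))$; (13) else GCAS$(=, A, (t', o', roptr'), (t, o, \&H_p))$; end while; (14) return $H_p.response$. Notation: an ''operation'' $o$ means one invocation of DoOp$(o)$ (or the initial $NOOP$). $p(o)$ is the process executing it; $t(o)$ is the value returned by its F\&I at line 2, or $\infty$ if line 2 has not been executed; $h(o)$ is $H_{p(o)}$. For $NOOP$: $t(NOOP)=0$ and $h(NOOP)$ is the immutable location containing $(0,\perp)$. ''Line 12 is executed for $o$'' means the new value written in that GCAS has the form $(t(o), -, r, h(o))$. *)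

(* Defs.v *)
(* Operational model of algorithm U (universal construction
   from F&I + GCAS objects) as a labelled transition system.  *)
From Stdlib Require Import Arith.

Set Implicit Arguments.

Inductive rval (RES : Type) : Type :=
| Bot : rval RES
| Null : rval RES
| Res : RES -> rval RES.
Arguments Bot {RES}.
Arguments Null {RES}.

(* Pointers to response objects: h(NOOP) (immutable location containing
   (0,bot)) or &H_p for a process p (processes are indexed by nat:
   possibly infinitely many processes). *)
Inductive ptr : Type := PNoop | PH (p : nat).

(* Local state of a process = program counter together with the values of
   the local variables that are live at that point.  AtK means "next step
   executes line K".
   Names: o, t = argument and ticket; ts ss rs ps = t_star, s_star, r_star, roptr_star;
   t1 o1 p1 = t', o', roptr'; th rh = t^, r^; s1 r1 = s', r'.
   The op field o' of A is an option: None = NOOP. *)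
Inductive lstate (OP Q RES : Type) : Type :=
| Idle
| At2 (o : OP)
| At3 (o : OP) (t : nat)
| At4 (o : OP) (t : nat)
| At5 (o : OP) (t : nat)
| At6 (o : OP) (t : nat) (ts : nat) (ss : Q) (rs : rval RES) (ps : ptr)
| At7 (o : OP) (t : nat) (ts : nat) (ss : Q) (rs : rval RES) (ps : ptr)
| At8 (o : OP) (t : nat) (ts : nat) (ss : Q) (rs : rval RES) (ps : ptr)
| At9 (o : OP) (t : nat) (ts : nat) (ss : Q) (rs : rval RES) (ps : ptr)
      (t1 : nat) (o1 : option OP) (p1 : ptr)
| At10 (o : OP) (t : nat) (ts : nat) (ss : Q) (rs : rval RES) (ps : ptr)
      (t1 : nat) (o1 : option OP) (p1 : ptr) (th : nat) (rh : rval RES)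
| At11 (o : OP) (t : nat) (ts : nat) (ss : Q) (rs : rval RES) (ps : ptr)
      (t1 : nat) (o1 : option OP) (p1 : ptr)
| At12 (o : OP) (t : nat) (ts : nat) (ss : Q) (rs : rval RES) (ps : ptr)
      (t1 : nat) (o1 : option OP) (p1 : ptr) (s1 : Q) (r1 : RES)
| At13 (o : OP) (t : nat) (t1 : nat) (o1 : option OP) (p1 : ptr)
| At14 (o : OP) (t : nat).
Arguments Idle {OP Q RES}.
Arguments At2 {OP Q RES}.
Arguments At3 {OP Q RES}.
Arguments At4 {OP Q RES}.
Arguments At5 {OP Q RES}.
Arguments At6 {OP Q RES}.
Arguments At7 {OP Q RES}.
Arguments At8 {OP Q RES}.
Arguments At9 {OP Q RES}.
Arguments At10 {OP Q RES}.
Arguments At11 {OP Q RES}.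
Arguments At12 {OP Q RES}.
Arguments At13 {OP Q RES}.
Arguments At14 {OP Q RES}.

(* Global configuration: shared objects C, A, S, H_p, local states, and a
   ghost counter inv p = number of DoOp invocations started by p (used only
   to name operations). *)
Record config (OP Q RES : Type) : Type := Cfg {
  cC : nat;
  cA : nat * option OP * ptr;                 (* (time, op, ptr) *)
  cS : nat * Q * rval RES * ptr;              (* (time, state, response, ptr) *)
  cH : nat -> nat * rval RES;                 (* H_p = (time, response) *)
  cloc : nat -> lstate OP Q RES;
  cinv : nat -> nat
}.

Definition upd {X : Type} (f : nat -> X) (p : nat) (x : X) : nat -> X :=
  fun q => if Nat.eqb q p then x else f q.

Definition deref {RES : Type} (H : nat -> nat * rval RES) (x : ptr)
  : nat * rval RES :=
  match x with PNoop => (0, Bot) | PH q => H q end.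

(* Initial configuration; H0 = (arbitrary, unspecified) initial contents of
   the objects H_p. *)
Definition init {OP Q RES : Type} (s0 : Q) (H0 : nat -> nat * rval RES)
  : config OP Q RES :=
  {| cC := 1; cA := (0, None, PNoop); cS := (0, s0, Bot, PNoop);
     cH := H0; cloc := fun _ => Idle; cinv := fun _ => 0 |}.

(* Step labels.  LFI p v: p executed line 2 and F&I returned v.
   LSucc12 p w: p executed line 12, the GCAS returned true and wrote w into S.
   LOther p: any other step of p. *)
Inductive label (Q RES : Type) : Type :=
| LFI (p : nat) (v : nat)
| LSucc12 (p : nat) (w : nat * Q * rval RES * ptr)
| LOther (p : nat).
Arguments LFI {Q RES}.
Arguments LSucc12 {Q RES}.
Arguments LOther {Q RES}.

Section Step.
Context {OP Q RES : Type} (delta : Q -> OP -> Q -> RES -> Prop).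
Notation cfg := (config OP Q RES).

Definition setloc (c : cfg) p l : cfg :=
  {| cC := cC c; cA := cA c; cS := cS c; cH := cH c;
     cloc := upd (cloc c) p l; cinv := cinv c |}.

(* One atomic step of process p (each line is one atomic step). *)
Inductive step : cfg -> label Q RES -> cfg -> Prop :=
(* line 1: invocation of DoOp(o) (o chosen by the environment) *)
| st1 c p o :
    cloc c p = Idle ->
    step c (LOther p)
      {| cC := cC c; cA := cA c; cS := cS c; cH := cH c;
         cloc := upd (cloc c) p (At2 o); cinv := upd (cinv c) p (S (cinv c p)) |}
(* line 2: t := F&I(C) *)
| st2 c p o :
    cloc c p = At2 o ->
    step c (LFI p (cC c))
      {| cC := S (cC c); cA := cA c; cS := cS c; cH := cH c;
         cloc := upd (cloc c) p (At3 o (cC c)); cinv := cinv c |}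
(* line 3: H_p := (t, NULL) *)
| st3 c p o t :
    cloc c p = At3 o t ->
    step c (LOther p)
      {| cC := cC c; cA := cA c; cS := cS c; cH := upd (cH c) p (t, Null);
         cloc := upd (cloc c) p (At4 o t); cinv := cinv c |}
(* line 4: while H_p = (t, NULL) *)
| st4_in c p o t :
    cloc c p = At4 o t -> cH c p = (t, Null) ->
    step c (LOther p) (setloc c p (At5 o t))
| st4_out c p o t :
    cloc c p = At4 o t -> cH c p <> (t, Null) ->
    step c (LOther p) (setloc c p (At14 o t))
| st5 c p o t ts ss rs ps :
    cloc c p = At5 o t -> cS c = (ts, ss, rs, ps) ->
    step c (LOther p) (setloc c p (At6 o t ts ss rs ps))
(* line 6: GCAS(=, deref roptr_star, (t_star,NULL), (t_star,r_star)) *)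
| st6_ok c p o t ts ss rs q :
    cloc c p = At6 o t ts ss rs (PH q) -> cH c q = (ts, Null) ->
    step c (LOther p)
      {| cC := cC c; cA := cA c; cS := cS c; cH := upd (cH c) q (ts, rs);
         cloc := upd (cloc c) p (At7 o t ts ss rs (PH q)); cinv := cinv c |}
| st6_fail c p o t ts ss rs ps :
    cloc c p = At6 o t ts ss rs ps -> deref (cH c) ps <> (ts, Null) ->
    step c (LOther p) (setloc c p (At7 o t ts ss rs ps))
(* line 7: GCAS(>, A, (t,-,-), (t, o, &H_p)) *)
| st7_ok c p o t ts ss rs ps a1 a2 a3 :
    cloc c p = At7 o t ts ss rs ps -> cA c = (a1, a2, a3) -> t < a1 ->
    step c (LOther p)
      {| cC := cC c; cA := (t, Some o, PH p); cS := cS c; cH := cH c;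
         cloc := upd (cloc c) p (At8 o t ts ss rs ps); cinv := cinv c |}
| st7_fail c p o t ts ss rs ps a1 a2 a3 :
    cloc c p = At7 o t ts ss rs ps -> cA c = (a1, a2, a3) -> a1 <= t ->
    step c (LOther p) (setloc c p (At8 o t ts ss rs ps))
| st8 c p o t ts ss rs ps t1 o1 p1 :
    cloc c p = At8 o t ts ss rs ps -> cA c = (t1, o1, p1) ->
    step c (LOther p) (setloc c p (At9 o t ts ss rs ps t1 o1 p1))
(* line 9: (t^, r^) := deref roptr' *)
| st9 c p o t ts ss rs ps t1 o1 p1 th rh :
    cloc c p = At9 o t ts ss rs ps t1 o1 p1 -> deref (cH c) p1 = (th, rh) ->
    step c (LOther p) (setloc c p (At10 o t ts ss rs ps t1 o1 p1 th rh))
| st10_then c p o t ts ss rs ps t1 o1 p1 th rh :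
    cloc c p = At10 o t ts ss rs ps t1 o1 p1 th rh -> (th, rh) = (t1, Null) ->
    step c (LOther p) (setloc c p (At11 o t ts ss rs ps t1 o1 p1))
| st10_else c p o t ts ss rs ps t1 o1 p1 th rh :
    cloc c p = At10 o t ts ss rs ps t1 o1 p1 th rh -> (th, rh) <> (t1, Null) ->
    step c (LOther p) (setloc c p (At13 o t t1 o1 p1))
(* line 11: (s', r') := apply_T(o', s_star) -- any result allowed by delta
   (if o' were NOOP, which cannot happen, any result is allowed) *)
| st11 c p o t ts ss rs ps t1 o1 p1 s1 r1 :
    cloc c p = At11 o t ts ss rs ps t1 o1 p1 ->
    (forall oo, o1 = Some oo -> delta ss oo s1 r1) ->
    step c (LOther p) (setloc c p (At12 o t ts ss rs ps t1 o1 p1 s1 r1))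
(* line 12: GCAS(=, S, (t_star,s_star,r_star,roptr_star), (t',s',r',roptr')) *)
| st12_ok c p o t ts ss rs ps t1 o1 p1 s1 r1 :
    cloc c p = At12 o t ts ss rs ps t1 o1 p1 s1 r1 ->
    cS c = (ts, ss, rs, ps) ->
    step c (LSucc12 p (t1, s1, Res r1, p1))
      {| cC := cC c; cA := cA c; cS := (t1, s1, Res r1, p1); cH := cH c;
         cloc := upd (cloc c) p (At4 o t); cinv := cinv c |}
| st12_fail c p o t ts ss rs ps t1 o1 p1 s1 r1 :
    cloc c p = At12 o t ts ss rs ps t1 o1 p1 s1 r1 ->
    cS c <> (ts, ss, rs, ps) ->
    step c (LOther p) (setloc c p (At4 o t))
(* line 13: GCAS(=, A, (t',o',roptr'), (t, o, &H_p)) *)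
| st13_ok c p o t t1 o1 p1 :
    cloc c p = At13 o t t1 o1 p1 -> cA c = (t1, o1, p1) ->
    step c (LOther p)
      {| cC := cC c; cA := (t, Some o, PH p); cS := cS c; cH := cH c;
         cloc := upd (cloc c) p (At4 o t); cinv := cinv c |}
| st13_fail c p o t t1 o1 p1 :
    cloc c p = At13 o t t1 o1 p1 -> cA c <> (t1, o1, p1) ->
    step c (LOther p) (setloc c p (At4 o t))
(* line 14: return H_p.response *)
| st14 c p o t :
    cloc c p = At14 o t ->
    step c (LOther p) (setloc c p Idle).
End Step.

(* Operations: the initial NOOP, or the n-th invocation of DoOp by process p
   (n >= 1). *)
Inductive opid : Type := ONoop | OInv (p n : nat).

Definition hof (o : opid) : ptr :=
  match o with ONoop => PNoop | OInv p _ => PH p end.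

(* tof cfg lab T o v : in the execution prefix consisting of steps 0..T-1,
   t(o) = v (i.e. the F&I of o at line 2 has been executed and returned v;
   t(NOOP) = 0).  If no such v exists, t(o) = infinity. *)
Definition tof {OP Q RES : Type} (cfg : nat -> config OP Q RES)
  (lab : nat -> label Q RES) (T : nat) (o : opid) (v : nat) : Prop :=
  match o with
  | ONoop => v = 0
  | OInv p n => exists i, i < T /\ lab i = LFI p v /\ cinv (cfg i) p = n
  end.

Definition is_succ12 {Q RES : Type} (l : label Q RES) : Prop :=
  exists p w, l = LSucc12 p w.

(* Step i is an execution of line 12 for operation o: the new value written
   has the form (t(o), -, -, h(o)). *)
Definition line12_for {OP Q RES : Type} (cfg : nat -> config OP Q RES)
  (lab : nat -> label Q RES) (T : nat) (i : nat) (o : opid) : Prop :=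
  exists p t1 s1 r1 p1,
    lab i = LSucc12 p (t1, s1, r1, p1) /\ tof cfg lab T o t1 /\ p1 = hof o.

(* Main.v *)
Require Import Defs.
From Stdlib Require Import Arith Lia.

Lemma classic_pair_dec (x y : nat * ptr) : {x = y} + {x <> y}.
Proof. decide equality; [decide equality|]; apply Nat.eq_dec. Qed.

Section Pf.
Variables (OP Q RES : Type) (delta : Q -> OP -> Q -> RES -> Prop).
Notation cfgT := (config OP Q RES).
Notation stp := (step delta).

Lemma upd_eq {X} (f : nat -> X) p x : upd f p x p = x.
Proof. unfold upd; rewrite Nat.eqb_refl; auto. Qed.
Lemma upd_neq {X} (f : nat -> X) p x q : q <> p -> upd f p x q = f q.
Proof. intro H; unfold upd; destruct (Nat.eqb_spec q p); congruence. Qed.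

Definition issued (c : cfgT) t r := t < cC c /\ forall o, cloc c r <> At3 o t.
Definition sealed (c : cfgT) t r := issued c t r /\ cH c r <> (t, Null).

Definition lproc (l : label Q RES) : nat :=
  match l with LFI p _ => p | LSucc12 p _ => p | LOther p => p end.

Lemma step_cC c l c' : stp c l c' -> cC c <= cC c'.
Proof. intro H; destruct H; simpl; lia. Qed.

Lemma step_loc_other c l c' q : stp c l c' -> q <> lproc l -> cloc c' q = cloc c q.
Proof. intros H Hq; destruct H; unfold setloc; simpl in *; apply upd_neq; auto. Qed.

Lemma step_issued c l c' t r : stp c l c' -> issued c t r -> issued c' t r.
Proof.
  intros H [Ht Hl]; destruct H; unfold setloc, issued; simpl;
  (split; [lia|]); intros o'; unfold upd;
  match goal with |- context [Nat.eqb r ?p] => destruct (Nat.eqb r p) end;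
  try apply Hl; try discriminate.
  intro E; inversion E; lia.
Qed.

Lemma step_sealed c l c' t r : stp c l c' -> sealed c t r -> sealed c' t r.
Proof.
  intros H [Hi Hh]; split; [eapply step_issued; eauto|].
  destruct Hi as [Ht Hl].
  destruct H; unfold setloc; simpl; auto; unfold upd.
  - destruct (Nat.eqb_spec r p); subst; auto.
    intro E; inversion E; subst. eapply Hl; eauto.
  - destruct (Nat.eqb_spec r q); subst; auto.
    intro E; inversion E; subst. congruence.
Qed.

Definition SvalOK (c : cfgT) (D : nat -> ptr -> Prop) (x : nat * Q * rval RES * ptr) : Prop :=
  match x with (ts, _, rs, ps) =>
    rs <> Null /\ (ps = PNoop \/ (D ts ps /\ exists r, ps = PH r /\ issued c ts r)) end.
Definition SsealOK (c : cfgT) (D : nat -> ptr -> Prop) ts ps : Prop :=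
  ps = PNoop \/ (D ts ps /\ exists r, ps = PH r /\ sealed c ts r).
Definition AvalOK (c : cfgT) (L : nat -> nat -> Prop) (a : nat * option OP * ptr) : Prop :=
  a = (0, None, PNoop) \/ exists t o r, a = (t, Some o, PH r) /\ issued c t r /\ L r t.
Definition Good (c : cfgT) (D : nat -> ptr -> Prop) ts ss rs ps t1 p1 : Prop :=
  p1 <> PNoop /\ (cS c = (ts, ss, rs, ps) -> ~ D t1 p1).

Definition LocInv (c : cfgT) D L q (s : lstate OP Q RES) : Prop :=
  match s with
  | Idle => True
  | At2 _ => True
  | At3 _ t | At4 _ t | At5 _ t | At14 _ t | At13 _ t _ _ _ => L q t
  | At6 _ t ts ss rs ps => L q t /\ SvalOK c D (ts, ss, rs, ps)
  | At7 _ t ts ss rs ps | At8 _ t ts ss rs ps => L q t /\ SsealOK c D ts ps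
  | At9 _ t ts ss rs ps t1 o1 p1 =>
      L q t /\ SsealOK c D ts ps /\ AvalOK c L (t1, o1, p1)
  | At10 _ t ts ss rs ps t1 o1 p1 th rh =>
      L q t /\ SsealOK c D ts ps /\ AvalOK c L (t1, o1, p1) /\
      ((th, rh) = (t1, Null) -> Good c D ts ss rs ps t1 p1)
  | At11 _ t ts ss rs ps t1 o1 p1 | At12 _ t ts ss rs ps t1 o1 p1 _ _ =>
      L q t /\ SsealOK c D ts ps /\ AvalOK c L (t1, o1, p1) /\
      Good c D ts ss rs ps t1 p1
  end.

Definition spair (x : nat * Q * rval RES * ptr) : nat * ptr :=
  match x with (ts, _, _, ps) => (ts, ps) end.

Record Inv (c : cfgT) (D : nat -> ptr -> Prop) (L : nat -> nat -> Prop) : Prop := {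
  G1 : forall r t, L r t -> t < cC c;
  G2 : AvalOK c L (cA c);
  G3 : SvalOK c D (cS c);
  G4 : forall t r, D t (PH r) -> spair (cS c) <> (t, PH r) -> sealed c t r;
  G5 : forall q, LocInv c D L q (cloc c q) }.

Lemma key c D L l c' p t1 s1 r1 p1 :
  Inv c D L -> stp c l c' -> l = LSucc12 p (t1, s1, r1, p1) ->
  ~ D t1 p1 /\ exists r, p1 = PH r /\ L r t1 /\ issued c t1 r.
Proof.
  intros I H E; destruct H; try discriminate.
  inversion E; subst.
  pose proof (G5 _ _ _ I p) as Hl. rewrite H in Hl. simpl in Hl.
  destruct Hl as (_ & _ & Ha & Hg & Hd).
  split; [apply Hd; auto|].
  destruct Ha as [Ha | (tt & oo & r & Ha & Hi & HL)].
  - inversion Ha; subst; congruence.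
  - inversion Ha; subst; eauto.
Qed.

Lemma loc_frame c c' D D' L L' q s :
  (forall t r, issued c t r -> issued c' t r) ->
  (forall t r, sealed c t r -> sealed c' t r) ->
  (forall t p, D t p -> D' t p) -> (forall r t, L r t -> L' r t) ->
  (forall ts ss rs ps, cS c' = (ts, ss, rs, ps) -> (ps = PNoop \/ D ts ps) ->
      cS c = (ts, ss, rs, ps) /\ (forall t p, D' t p -> D t p)) ->
  LocInv c D L q s -> LocInv c' D' L' q s.
Proof.
  intros Hi Hs HD HL HS.
  assert (HA : forall a, AvalOK c L a -> AvalOK c' L' a).
  { intros a [A|(t&o&r&A&B&C)]; [left; auto| right; exists t, o, r; auto]. }
  assert (HSe : forall ts ps, SsealOK c D ts ps -> SsealOK c' D' ts ps).
  { intros ts ps [A|(A&r&B&C)]; [left; auto| right; split; eauto]. }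
  assert (HG : forall ts ss rs ps t1 p1, SsealOK c D ts ps ->
     Good c D ts ss rs ps t1 p1 -> Good c' D' ts ss rs ps t1 p1).
  { intros ts ss rs ps t1 p1 Hse [A B]; split; auto.
    intros E Hd. assert (ps = PNoop \/ D ts ps) as Hp.
    { destruct Hse as [X|(X&_)]; auto. }
    destruct (HS _ _ _ _ E Hp) as [E' HD']. apply (B E'); auto. }
  destruct s; simpl; auto; intuition.
  destruct H3 as (r&B&C). right; split; eauto.
Qed.

Lemma step_S c l c' : stp c l c' -> (forall q w, l <> LSucc12 q w) -> cS c' = cS c.
Proof. intros H Hn; destruct H; simpl; auto. exfalso; eapply Hn; eauto. Qed.
Lemma step_S12 c l c' q w : stp c l c' -> l = LSucc12 q w -> cS c' = w.
Proof. intros H E; destruct H; try discriminate. inversion E; subst; simpl; auto. Qed.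

Lemma aval_mono c c' L L' a :
  (forall t r, issued c t r -> issued c' t r) -> (forall r t, L r t -> L' r t) ->
  AvalOK c L a -> AvalOK c' L' a.
Proof. intros Hi HL [A|(t&o&r&A&B&C)]; [left; auto| right; exists t, o, r; auto]. Qed.

Lemma sval_mono c c' D D' x :
  (forall t r, issued c t r -> issued c' t r) -> (forall t p, D t p -> D' t p) ->
  SvalOK c D x -> SvalOK c' D' x.
Proof.
  intros Hi HD; destruct x as [[[ts ss] rs] ps]; simpl.
  intros [A [B|(B&r&C&E)]]; split; auto. right; split; eauto.
Qed.

Section Pres.
Variables (c c' : cfgT) (D D' : nat -> ptr -> Prop) (L L' : nat -> nat -> Prop)
  (l : label Q RES).
Hypothesis I : Inv c D L.
Hypothesis Hst : stp c l c'.
Hypothesis HD : forall t p, D' t p <-> D t p \/ exists q s r, l = LSucc12 q (t, s, r, p).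
Hypothesis HL : forall r t, L' r t <-> L r t \/ l = LFI r t.

Lemma HDs : forall t p, D t p -> D' t p.
Proof. intros; apply HD; auto. Qed.
Lemma HLs : forall r t, L r t -> L' r t.
Proof. intros; apply HL; auto. Qed.
Lemma Hiss : forall t r, issued c t r -> issued c' t r.
Proof. intros; eapply step_issued; eauto. Qed.
Lemma Hsea : forall t r, sealed c t r -> sealed c' t r.
Proof. intros; eapply step_sealed; eauto. Qed.

Lemma notsucc_D : (forall q w, l <> LSucc12 q w) -> forall t p, D' t p -> D t p.
Proof.
  intros Hn t p Hd. apply HD in Hd. destruct Hd as [Hd|(q&s&r&E)]; auto.
  exfalso; eapply Hn; eauto.
Qed.

Lemma scond : forall ts ss rs ps, cS c' = (ts, ss, rs, ps) -> (ps = PNoop \/ D ts ps) ->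
      cS c = (ts, ss, rs, ps) /\ (forall t p, D' t p -> D t p).
Proof.
  intros ts ss rs ps E Hp.
  assert (Hc : (exists q w, l = LSucc12 q w) \/ (forall q w, l <> LSucc12 q w)).
  { destruct l; [right; intros; discriminate | left; eauto | right; intros; discriminate]. }
  destruct Hc as [(q&w&El)|Hn].
  - exfalso. destruct w as [[[t1 s1] r1] p1].
    destruct (key _ D L _ _ q t1 s1 r1 p1 I Hst El) as [A (r&B&_)].
    rewrite (step_S12 _ _ _ _ _ Hst El) in E. inversion E; subst.
    destruct Hp; [discriminate|auto].
  - rewrite (step_S _ _ _ Hst Hn) in E.
    split; [exact E|]. apply notsucc_D; auto.
Qed.

Lemma loc_other : forall q, q <> lproc l -> LocInv c' D' L' q (cloc c' q).
Proof.
  intros q Hq. rewrite (step_loc_other _ _ _ _ Hst Hq).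
  eapply loc_frame; [exact Hiss|exact Hsea|exact HDs|exact HLs|exact scond|].
  apply (G5 _ _ _ I).
Qed.

End Pres.

Ltac oldloc g5 p H := let Lp := fresh "Lp" in pose proof (g5 p) as Lp; rewrite H in Lp; simpl in Lp.

Lemma pres_G1 c D L l c' L' : Inv c D L -> stp c l c' ->
  (forall r t, L' r t <-> L r t \/ l = LFI r t) -> forall r t, L' r t -> t < cC c'.
Proof.
  intros I Hst HL r t H. apply HL in H. destruct H as [H|E].
  - apply (G1 _ _ _ I) in H. pose proof (step_cC _ _ _ Hst). lia.
  - subst l. inversion Hst; subst; simpl; lia.
Qed.

Lemma pres_G2 c D L l c' L' : Inv c D L -> stp c l c' ->
  (forall r t, L' r t <-> L r t \/ l = LFI r t) -> AvalOK c' L' (cA c').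
Proof.
  intros I Hst HL.
  pose proof (Hiss _ _ _ Hst) as hi. pose proof (HLs _ _ _ HL) as hLs.
  pose proof (pres_G1 _ _ _ _ _ _ I Hst HL) as g1'.
  destruct I as [g1 g2 g3 g4 g5].
  pose proof (aval_mono _ _ _ _ (cA c) hi hLs g2) as a2.
  destruct Hst; try exact a2.
  - oldloc g5 p H. destruct Lp as [Lp _].
    right; exists t, o, p; split; [reflexivity|split; [|auto]].
    split; [apply (g1' p); auto | simpl; intros; rewrite upd_eq; discriminate].
  - oldloc g5 p H.
    right; exists t, o, p; split; [reflexivity|split; [|auto]].
    split; [apply (g1' p); auto | simpl; intros; rewrite upd_eq; discriminate].
Qed.

Lemma pres_G3 c D L l c' D' : Inv c D L -> stp c l c' ->
  (forall t p, D' t p <-> D t p \/ exists q s r, l = LSucc12 q (t, s, r, p)) ->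
  SvalOK c' D' (cS c').
Proof.
  intros I Hst HD.
  pose proof (Hiss _ _ _ Hst) as hi. pose proof (HDs _ _ _ HD) as hDs.
  assert (Hc : (exists q w, l = LSucc12 q w) \/ (forall q w, l <> LSucc12 q w)).
  { destruct l; [right; intros; discriminate | left; eauto | right; intros; discriminate]. }
  destruct Hc as [(q&w&El)|Hn].
  - destruct w as [[[t1 s1] r1] p1].
    destruct (key _ D L _ _ q t1 s1 r1 p1 I Hst El) as [A (r&B&C&E)].
    rewrite (step_S12 _ _ _ _ _ Hst El). subst l.
    inversion Hst; subst. simpl. split; [discriminate|right].
    split; [apply HD; right; eauto|]. exists r; split; auto.
  - rewrite (step_S _ _ _ Hst Hn). eapply sval_mono; eauto. apply (G3 _ _ _ I).
Qed.

Lemma pres_G4 c D L l c' D' : Inv c D L -> stp c l c' ->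
  (forall t p, D' t p <-> D t p \/ exists q s r, l = LSucc12 q (t, s, r, p)) ->
  forall t r, D' t (PH r) -> spair (cS c') <> (t, PH r) -> sealed c' t r.
Proof.
  intros I Hst HD t r Hd Hne.
  pose proof (Hsea _ _ _ Hst) as hse.
  assert (Hc : (exists q w, l = LSucc12 q w) \/ (forall q w, l <> LSucc12 q w)).
  { destruct l; [right; intros; discriminate | left; eauto | right; intros; discriminate]. }
  destruct Hc as [(q&w&El)|Hn].
  - destruct w as [[[t1 s1] r1] p1].
    rewrite (step_S12 _ _ _ _ _ Hst El) in Hne. simpl in Hne.
    apply HD in Hd. destruct Hd as [Hd|(q'&s'&r'&E)].
    + apply hse. subst l. inversion Hst; subst.
      destruct (classic_pair_dec (spair (cS c)) (t, PH r)) as [Eq|Neq].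
      * pose proof (G5 _ _ _ I q) as Lp. rewrite H6 in Lp. simpl in Lp.
        destruct Lp as (_ & Hs & _).
        rewrite H7 in Eq. simpl in Eq. inversion Eq; subst.
        destruct Hs as [X|(_&rr&X&Y)]; [discriminate|]. inversion X; subst; auto.
      * apply (G4 _ _ _ I); auto.
    + rewrite El in E. inversion E; subst. congruence.
  - rewrite (step_S _ _ _ Hst Hn) in Hne. apply hse. apply (G4 _ _ _ I); auto.
    eapply notsucc_D; eauto.
Qed.

Lemma pres_G5 c D L l c' D' L' : Inv c D L -> stp c l c' ->
  (forall t p, D' t p <-> D t p \/ exists q s r, l = LSucc12 q (t, s, r, p)) ->
  (forall r t, L' r t <-> L r t \/ l = LFI r t) ->
  forall q, LocInv c' D' L' q (cloc c' q).
Proof.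
  intros I Hst HD HL q.
  destruct (Nat.eq_dec q (lproc l)) as [Eq|Ne]; [|eapply loc_other; eauto].
  subst q.
  pose proof (loc_frame c c' D D' L L' (lproc l) (cloc c (lproc l))
     (Hiss _ _ _ Hst) (Hsea _ _ _ Hst) (HDs _ _ _ HD) (HLs _ _ _ HL)
     (scond _ _ _ _ _ _ _ I Hst HD HL) (G5 _ _ _ I _)) as Lp.
  pose proof (pres_G2 _ _ _ _ _ _ I Hst HL) as g2'.
  pose proof (pres_G3 _ _ _ _ _ _ I Hst HD) as g3'.
  pose proof (pres_G4 _ _ _ _ _ _ I Hst HD) as g4'.
  pose proof (HLs _ _ _ HL) as hLs.
  pose proof (HL (lproc l)) as HLp.
  destruct Hst; simpl in *; unfold setloc in *; simpl in *; rewrite upd_eq;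
    rewrite H in Lp; simpl in Lp; simpl; auto;
    try (destruct Lp as (A&B&C&G); solve [auto]).
  - apply HLp; auto.
  - split; auto. rewrite H0 in g3'; exact g3'.
  - destruct Lp as [A [B C]]. split; auto.
    destruct C as [X|(X&r&Y&Z)]; [discriminate|]. inversion Y; subst.
    right; split; auto. exists r; split; auto. split; auto.
    simpl. rewrite upd_eq. intro E; inversion E; congruence.
  - destruct Lp as [A [B C]]. split; auto.
    destruct C as [X|(X&r&Y&Z)]; [left; auto|]. subst ps.
    right; split; auto. exists r; split; auto. split; auto.
  - destruct Lp as [A B]; split; auto. split; auto. rewrite H0 in g2'; exact g2'.
  - destruct Lp as (A&B&C). split; auto; split; auto; split; auto.
    intros E; inversion E; subst th rh. split.
    + intro Ep; subst p1; simpl in H0; discriminate.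
    + intros ES Hd. destruct p1 as [|r1]; [simpl in H0; discriminate|].
      simpl in H0.
      destruct (classic_pair_dec (ts, ps) (t1, PH r1)) as [Eq|Neq].
      * inversion Eq; subst. destruct B as [X|(_&rr&X&Y)]; [discriminate|].
        inversion X; subst. destruct Y as [_ Y]. simpl in Y. congruence.
      * assert (Hs := g4' t1 r1 Hd).
        simpl in ES; rewrite ES in Hs; simpl in Hs. specialize (Hs Neq).
        destruct Hs as [_ Hs]. simpl in Hs. congruence.
Qed.

Lemma preserve c D L l c' D' L' : Inv c D L -> stp c l c' ->
  (forall t p, D' t p <-> D t p \/ exists q s r, l = LSucc12 q (t, s, r, p)) ->
  (forall r t, L' r t <-> L r t \/ l = LFI r t) ->
  Inv c' D' L'.
Proof.
  intros I Hst HD HL; split.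
  - eapply pres_G1; eauto.
  - eapply pres_G2; eauto.
  - eapply pres_G3; eauto.
  - eapply pres_G4; eauto.
  - eapply pres_G5; eauto.
Qed.

Lemma step_cinv c l c' p : stp c l c' ->
  (cinv c' p = cinv c p /\ (forall o, cloc c' p = At2 o -> cloc c p = At2 o)) \/
  cinv c' p = S (cinv c p).
Proof.
  intro H; destruct H; unfold setloc; simpl; unfold upd;
  destruct (Nat.eqb_spec p p0); subst; auto;
  try (left; split; auto; intros; discriminate).
Qed.

Lemma step_LFI c p v c' : stp c (LFI p v) c' ->
  (exists o, cloc c p = At2 o) /\ cinv c' p = cinv c p /\ (forall o, cloc c' p <> At2 o).
Proof.
  intro H; inversion H; subst; simpl. split; eauto. split; auto.
  intros o'; rewrite upd_eq; discriminate.
Qed.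

End Pf.

Section Top.
Variables (OP Q RES : Type) (delta : Q -> OP -> Q -> RES -> Prop)
  (s0 : Q) (H0 : nat -> nat * rval RES)
  (cfg : nat -> config OP Q RES) (lab : nat -> label Q RES) (T : nat).
Hypothesis Hinit : cfg 0 = init s0 H0.
Hypothesis Hsteps : forall i, i < T -> step delta (cfg i) (lab i) (cfg (S i)).

Definition Dk k t p := exists m, m < k /\ exists q s r, lab m = LSucc12 q (t, s, r, p).
Definition Lk k r t := exists m, m < k /\ lab m = LFI r t.

Lemma inv_all : forall k, k <= T -> Inv OP Q RES (cfg k) (Dk k) (Lk k).
Proof.
  induction k; intro Hk.
  - rewrite Hinit. split; simpl.
    + intros r t (m&Hm&_); lia.
    + left; auto.
    + split; [discriminate|left; auto].
    + intros t r (m&Hm&_); lia.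
    + intros; exact I.
  - eapply preserve; [apply IHk; lia| apply Hsteps; lia| |].
    + intros t p; split.
      * intros (m&Hm&X). destruct (Nat.eq_dec m k); [subst; right; auto|left; exists m; split; [lia|auto]].
      * intros [(m&Hm&X)|X]; [exists m; split; [lia|auto]|exists k; split; [lia|auto]].
    + intros r t; split.
      * intros (m&Hm&X). destruct (Nat.eq_dec m k); [subst; right; auto|left; exists m; split; [lia|auto]].
      * intros [(m&Hm&X)|X]; [exists m; split; [lia|auto]|exists k; split; [lia|auto]].
Qed.

Lemma after_lfi m p v : lab m = LFI p v -> forall k, m < k -> k <= T ->
  cinv (cfg k) p > cinv (cfg m) p \/
  (cinv (cfg k) p = cinv (cfg m) p /\ forall o, cloc (cfg k) p <> At2 o).
Proof.
  intros Hl k Hmk HkT. induction k; [lia|].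
  assert (Hs : step delta (cfg k) (lab k) (cfg (S k))) by (apply Hsteps; lia).
  destruct (Nat.eq_dec m k) as [E|Ne].
  - subst k. rewrite Hl in Hs. apply step_LFI in Hs. destruct Hs as (_&A&B). right; auto.
  - destruct IHk as [A|[A B]]; [lia|lia| |].
    + destruct (step_cinv _ _ _ _ _ _ _ p Hs) as [[C _]|C]; left; lia.
    + destruct (step_cinv _ _ _ _ _ _ _ p Hs) as [[C E]|C]; [right|left; lia].
      split; [lia|]. intros o Eo. apply (B o). apply E; auto.
Qed.

Lemma lfi_unique m1 m2 p v1 v2 : m1 < T -> m2 < T ->
  lab m1 = LFI p v1 -> lab m2 = LFI p v2 -> cinv (cfg m1) p = cinv (cfg m2) p -> v1 = v2.
Proof.
  intros H1 H2 L1 L2 E.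
  destruct (lt_eq_lt_dec m1 m2) as [[Lt|Eq]|Gt].
  - destruct (after_lfi m1 p v1 L1 m2 Lt ltac:(lia)) as [A|[A B]]; [lia|].
    pose proof (Hsteps m2 H2) as S2. rewrite L2 in S2. apply step_LFI in S2.
    destruct S2 as ((o&X)&_). exfalso; eapply B; eauto.
  - subst; congruence.
  - destruct (after_lfi m2 p v2 L2 m1 Gt ltac:(lia)) as [A|[A B]]; [lia|].
    pose proof (Hsteps m1 H1) as S1. rewrite L1 in S1. apply step_LFI in S1.
    destruct S1 as ((o&X)&_). exfalso; eapply B; eauto.
Qed.

Lemma succ_info i : i < T -> is_succ12 (lab i) ->
  exists q t1 s1 r1 r m, lab i = LSucc12 q (t1, s1, r1, PH r) /\ ~ Dk i t1 (PH r) /\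
     m < i /\ lab m = LFI r t1.
Proof.
  intros Hi (q&w&E). destruct w as [[[t1 s1] r1] p1].
  destruct (key _ _ _ _ _ _ _ _ _ _ _ _ _ _ (inv_all i ltac:(lia)) (Hsteps i Hi) E)
    as [A (r&B&(m&Hm&C)&_)].
  subst p1. exists q, t1, s1, r1, r, m; auto.
Qed.
End Top.

Theorem mainTheorem13 (OP Q RES : Type) (delta : Q -> OP -> Q -> RES -> Prop)
  (s0 : Q) (H0 : nat -> nat * rval RES)
  (cfg : nat -> config OP Q RES) (lab : nat -> label Q RES) (T : nat) :
  cfg 0 = init s0 H0 ->
  (forall i, i < T -> step delta (cfg i) (lab i) (cfg (S i))) ->
  forall j i, j < i -> i < T ->
    is_succ12 (lab j) -> is_succ12 (lab i) ->
    exists oj oi, oj <> oi /\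
      line12_for cfg lab T j oj /\ line12_for cfg lab T i oi.
Proof.
  intros Hinit Hsteps j i Hji HiT Sj Si.
  destruct (succ_info OP Q RES delta s0 H0 cfg lab T Hinit Hsteps j ltac:(lia) Sj)
    as (qj&t1j&s1j&r1j&rj&mj&Ej&NDj&Hmj&Lj).
  destruct (succ_info OP Q RES delta s0 H0 cfg lab T Hinit Hsteps i HiT Si)
    as (qi&t1i&s1i&r1i&ri&mi&Ei&NDi&Hmi&Li).
  exists (OInv rj (cinv (cfg mj) rj)), (OInv ri (cinv (cfg mi) ri)).
  split; [|split].
  - intro E; inversion E; subst ri.
    assert (t1j = t1i) by
      (eapply (lfi_unique OP Q RES delta cfg lab T Hsteps mj mi); eauto; lia).
    subst t1i. apply NDi. exists j; split; auto. rewrite Ej; eauto.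
  - exists qj, t1j, s1j, r1j, (PH rj); split; auto; split; [|reflexivity].
    exists mj; split; [lia|split; auto].
  - exists qi, t1i, s1i, r1i, (PH ri); split; auto; split; [|reflexivity].
    exists mi; split; [lia|split; auto].
Qed.
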